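(* For every $m\ge 1$ and every $m$-by-$2m$ disjoint matrix $M$, there are pairwise incomparable strings $\sigma_0,\tau_0,\dots,\sigma_{m-1},\tau_{m-1}$ such that $\sigma_i$ and $\tau_i$ are entries of the row $M(i)$ for every $i<m$.
   Context: Strings are finite binary strings, and $\preceq$ is the prefix relation. Two strings are incomparable if neither is a prefix of the other. An $m$-by-$n$ matrix $M$ is an array of strings $\sigma_{i,j}\in 2^{<\omega}$ for $i<m$ and $j<n$. Its $i$th row $M(i)$ is the tuple $(\sigma_{i,0},\dots,\sigma_{i,n-1})$. The matrix $M$ is disjoint if, for each $i<m$, the strings $\sigma_{i,0},\dots,\sigma_{i,n-1}$ are pairwise incomparable. *)

(* Defs.v *)
From mathcomp Require Import all_boot.
Set Implicit Arguments. Unset Strict Implicit. Unset Printing Implicit Defensive.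

Definition bstring := seq bool.

Definition prefixb (s t : bstring) : bool := prefix s t.

Definition incomparable (s t : bstring) : bool := ~~ prefixb s t && ~~ prefixb t s.

Definition strmatrix (m n : nat) := 'I_m -> 'I_n -> bstring.

Definition disjoint_matrix (m n : nat) (M : strmatrix m n) : Prop :=
  forall (i : 'I_m) (j k : 'I_n), j != k -> incomparable (M i j) (M i k).

(* Main.v *)
Require Import Defs.
From mathcomp Require Import all_boot.
From mathcomp Require Import zify.
From Stdlib Require Import Classical.
Set Implicit Arguments. Unset Strict Implicit.

Fixpoint lcp (s t : bstring) : bstring :=
  match s, t with
  | a :: s', b :: t' => if a == b then a :: lcp s' t' else [::]
  | _, _ => [::]
  end.

Lemma lcp_prefix s t : prefix (lcp s t) s && prefix (lcp s t) t.
Proof.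
elim: s t => [|a s IH] [|b t] //=.
case: eqP => [<-|_] //=; rewrite !eqxx /=; exact: IH.
Qed.

Lemma lcp_max u s t : prefix u s -> prefix u t -> prefix u (lcp s t).
Proof.
elim: s u t => [|a s IH] [|x u] [|b t] //=; rewrite ?prefix0s //.
move=> /andP[/eqP -> Hs] /andP[/eqP -> Ht] /=.
by rewrite eqxx /= eqxx IH.
Qed.

Lemma lcp_split s t : incomparable s t ->
  exists b, prefix (rcons (lcp s t) b) s /\ prefix (rcons (lcp s t) (~~ b)) t.
Proof.
elim: s t => [|a s IH] [|b t] //=; rewrite /incomparable /prefixb ?prefix0s ?andbF //=.
case: eqP => [<-|Hab].
  rewrite !eqxx /= => H; have [c [H1 H2]] := IH t H.
  by exists c; rewrite /= eqxx H1 H2.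
move=> _; exists a; split => /=; rewrite ?eqxx ?prefix0s //.
by case: a b Hab => [] [] //= _.
Qed.

Lemma prefix_comparable (T : eqType) (a b c : seq T) : prefix a c -> prefix b c -> prefix a b || prefix b a.
Proof.
elim: a b c => [|x a IH] [|y b] [|z c] //=; rewrite ?prefix0s ?orbT //.
move=> /andP[/eqP -> H1] /andP[/eqP -> H2]; rewrite eqxx /=; exact: IH H1 H2.
Qed.

Lemma prefix_rcons_inv (T : eqType) (x v : seq T) (b : T) : prefix x (rcons v b) -> x = rcons v b \/ prefix x v.
Proof.
elim: v x => [|y v IH] [|z x] //=; rewrite ?prefix0s; try by right.
  by case: x => [|w x] /andP[/eqP -> //]; left.
move=> /andP[/eqP -> H]; case: (IH _ H) => [->|H']; first by left.
by right; rewrite eqxx.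
Qed.

Lemma prefix_size (T : eqType) (a b : seq T) : prefix a b -> size a <= size b.
Proof. by move=> /prefixP [w ->]; rewrite size_cat leq_addr. Qed.

Lemma inc_sym x y : incomparable x y = incomparable y x.
Proof. by rewrite /incomparable andbC. Qed.

Lemma inc_neq x y : incomparable x y -> x != y.
Proof. by rewrite /incomparable /prefixb; apply: contraTneq => ->; rewrite prefix_refl. Qed.

Lemma count_le1 (T : eqType) (P : pred T) (s : seq T) : uniq s ->
  {in s &, forall x y, P x -> P y -> x = y} -> count P s <= 1.
Proof.
move=> us H; rewrite -size_filter.
have : uniq (filter P s) by exact: filter_uniq.
have : {in filter P s &, forall x y, x = y}.
  by move=> x y; rewrite !mem_filter => /andP[Px xs] /andP[Py ys]; exact: H.
case: (filter P s) => [|x [|y t]] //= Hxy /andP[Hn _].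
by move: Hn; rewrite (Hxy x y) ?inE ?eqxx ?orbT.
Qed.

Lemma cmp_ext (u x s : bstring) v b : u = rcons v b -> prefix u s ->
  ~~ incomparable x s -> prefix x v || prefix u x.
Proof.
move=> -> Hu; rewrite /incomparable /prefixb negb_and !negbK => /orP[Hx|Hx].
  case/orP: (prefix_comparable Hx Hu) => H; last by rewrite H orbT.
  case: (prefix_rcons_inv H) => [->|H']; first by rewrite prefix_refl orbT.
  by apply/orP; left.
by rewrite (prefix_trans Hu Hx) orbT.
Qed.

Lemma kill_le2 (s : seq bstring) v b sg ta :
  uniq s ->
  (forall x y, x \in s -> y \in s -> x != y -> incomparable x y) ->
  (forall c x y, x \in s -> y \in s -> x != y ->
      prefix (rcons v c) x -> prefix (rcons v c) y -> False) ->
  prefix (rcons v b) sg -> prefix (rcons v (~~ b)) ta ->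
  count (fun x => ~~ (incomparable x sg && incomparable x ta)) s <= 2.
Proof.
move=> us anti maxi Hs Ht.
set P1 := fun x : bstring => prefix x v.
set P2 := fun x : bstring => prefix (rcons v b) x.
set P3 := fun x : bstring => prefix (rcons v (~~ b)) x.
have eqP' : forall x y, x \in s -> y \in s -> (prefix x y || prefix y x) -> x = y.
  move=> x y xs ys H; apply/eqP; apply: contraTT H => /(anti _ _ xs ys).
  by rewrite /incomparable /prefixb negb_or.
apply: (@leq_trans (count (predU P1 (predU P2 P3)) s)).
  apply: sub_count => x /=; rewrite /P1 /P2 /P3 negb_and => /orP[H|H].
    by case/orP: (cmp_ext (erefl _) Hs H) => ->; rewrite ?orbT.
  by case/orP: (cmp_ext (erefl _) Ht H) => ->; rewrite ?orbT.
have c1 : count P1 s <= 1.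
  apply: count_le1 => // x y xs ys H1 H2; apply: eqP' => //.
  exact: prefix_comparable H1 H2.
have c2 : forall c, count (fun x => prefix (rcons v c) x) s <= 1.
  move=> c; apply: count_le1 => // x y xs ys H1 H2.
  by apply/eqP; apply/negP => /negP nxy; apply: (maxi c x y).
have cU : forall a1 a2 : pred bstring, count (predU a1 a2) s <= count a1 s + count a2 s.
  by move=> a1 a2; rewrite -count_predUI leq_addr.
case: (boolP (has P1 s)) => [/hasP [x0 x0s Px0]|nh].
  rewrite (@eq_in_count _ _ P1); first exact: (leq_trans c1).
  move=> y ys /=; case: (boolP (P1 y)) => //= nP1.
  apply/negbTE; rewrite negb_or; apply/andP; split; apply/negP => Hy.
    have e := eqP' _ _ x0s ys (introT orP (or_introl (prefix_trans Px0 (prefix_trans (prefix_rcons v b) Hy)))).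
    move: Hy (prefix_size Px0); rewrite -e => /prefix_size; rewrite size_rcons.
    by move=> h1 h2; have := leq_trans h1 h2; rewrite ltnn.
  have e := eqP' _ _ x0s ys (introT orP (or_introl (prefix_trans Px0 (prefix_trans (prefix_rcons v (~~ b)) Hy)))).
  move: Hy (prefix_size Px0); rewrite -e => /prefix_size; rewrite size_rcons.
  by move=> h1 h2; have := leq_trans h1 h2; rewrite ltnn.
apply: (leq_trans (cU _ _)).
have -> : count P1 s = 0 by apply/eqP; rewrite -leqn0 leqNgt -has_count.
rewrite add0n; apply: (leq_trans (cU _ _)).
by rewrite -[2]/(1 + 1); apply: leq_add; apply: c2.
Qed.

Lemma bounded_max (P : nat -> Prop) N : (exists n, P n) -> (forall n, P n -> n <= N) ->
  exists n, P n /\ forall k, P k -> k <= n.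
Proof.
move=> [n0 Pn0] bnd; apply: NNPP => nomax.
have H : forall j, exists n, P n /\ j <= n.
  elim=> [|j [n [Pn jn]]]; first by exists n0.
  apply: NNPP => Hno; apply: nomax; exists n; split => // k Pk.
  rewrite leqNgt; apply/negP => nk; apply: Hno; exists k; split => //.
  exact: leq_ltn_trans jn nk.
have [n [Pn Nn]] := H N.+1.
by have := leq_trans Nn (bnd n Pn); rewrite ltnn.
Qed.

Lemma gen (I : eqType) (n : nat) : forall (S : seq I) (R : I -> seq bstring),
  size S = n -> uniq S ->
  (forall r, r \in S -> uniq (R r)) ->
  (forall r x y, r \in S -> x \in R r -> y \in R r -> x != y -> incomparable x y) ->
  (forall r, r \in S -> 2 * size S <= size (R r)) ->
  exists c : I -> bool -> bstring,
    (forall r b, r \in S -> c r b \in R r) /\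
    (forall p q : I * bool, p.1 \in S -> q.1 \in S -> p != q ->
       incomparable (c p.1 p.2) (c q.1 q.2)).
Proof.
elim: n => [|n IH] S R.
  move=> /size0nil -> _ _ _ _; exists (fun _ _ => [::]); by split.
move=> sS uS uR anti szR.
have [i0 i0S] : exists i0, i0 \in S by case: S sS {uS uR anti szR} => // a S' _; exists a; rewrite inE eqxx.
set Q := fun k => exists r x y, [/\ r \in S, x \in R r, y \in R r, x != y & size (lcp x y) = k].
have Qex : exists k, Q k.
  have := szR _ i0S; rewrite sS.
  have := uR _ i0S; case E: (R i0) => [|x [|y t]] //=; rewrite ?mulnS // => /and3P[nx _ _] _.
  exists (size (lcp x y)), i0, x, y; split => //; rewrite ?E ?inE ?eqxx ?orbT //.
  by apply: contraNneq nx => ->; rewrite inE eqxx.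
set N := \max_(r <- S) \max_(x <- R r) size x.
have Qbnd : forall k, Q k -> k <= N.
  move=> k [r [x [y [rS xR yR _ <-]]]].
  have := lcp_prefix x y => /andP[/prefix_size h _].
  have h2 := @leq_bigmax_seq _ S xpredT (fun r => \max_(x <- R r) size x) r rS isT.
  have h3 := @leq_bigmax_seq _ (R r) xpredT size x xR isT.
  exact: leq_trans h (leq_trans h3 h2).
have [k [[i [sg [ta [iS sgR taR sgta <-]]]] kmax]] := bounded_max Qex Qbnd.
set v := lcp sg ta.
have [b [Hs Ht]] := lcp_split (anti _ _ _ iS sgR taR sgta).
set R' := fun r => filter (fun x => incomparable x sg && incomparable x ta) (R r).
have memS : forall r, r \in rem i S -> r \in S /\ r != i.
  by move=> r; rewrite (mem_rem_uniq _ uS) => /andP[].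
have [c' [c'R c'inc]] : exists c' : I -> bool -> bstring,
    (forall r b, r \in rem i S -> c' r b \in R' r) /\
    (forall p q : I * bool, p.1 \in rem i S -> q.1 \in rem i S -> p != q ->
       incomparable (c' p.1 p.2) (c' q.1 q.2)).
  apply: IH.
  - by rewrite size_rem // sS.
  - exact: rem_uniq.
  - by move=> r /memS [rS _]; apply: filter_uniq; apply: uR.
  - move=> r x y /memS [rS _]; rewrite !mem_filter => /andP[_ xR] /andP[_ yR].
    exact: (anti r x y rS xR yR).
  - move=> r /memS [rS _]; rewrite size_filter.
    have kl : count (fun x => ~~ (incomparable x sg && incomparable x ta)) (R r) <= 2.
      apply: (@kill_le2 _ v b) => //; first exact: uR.
      + by move=> x y xR yR; apply: (anti r x y rS xR yR).
      + move=> c x y xR yR nxy Hx Hy.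
        have := kmax (size (lcp x y)) (ex_intro _ r (ex_intro _ x (ex_intro _ y (And5 rS xR yR nxy erefl)))).
        have := lcp_max Hx Hy => /prefix_size; rewrite size_rcons.
        by move=> h1 h2; have := leq_trans h1 h2; rewrite ltnn.
    have := count_predC (fun x => incomparable x sg && incomparable x ta) (R r).
    have := szR _ rS; rewrite size_rem // sS.
    move: kl; set a := count _ _; set d := count _ _ => kl h1 h2.
    simpl; lia.
have remS : forall r, r \in S -> r != i -> r \in rem i S.
  by move=> r rS ri; rewrite (mem_rem_uniq _ uS) inE ri rS.
have c'R0 : forall r bb, r \in S -> r != i -> c' r bb \in R r.
  by move=> r bb rS ri; have := c'R r bb (remS r rS ri); rewrite mem_filter => /andP[].
have c'I : forall r bb, r \in S -> r != i -> incomparable sg (c' r bb) && incomparable ta (c' r bb).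
  move=> r bb rS ri; have := c'R r bb (remS r rS ri); rewrite mem_filter => /andP[/andP[h1 h2] _].
  by rewrite inc_sym h1 inc_sym h2.
have sgtaI : incomparable sg ta := anti _ _ _ iS sgR taR sgta.
exists (fun r bb => if r == i then (if bb then ta else sg) else c' r bb); split.
  move=> r bb rS; case: eqP => [->|/eqP ri]; last exact: c'R0.
  by case: bb.
move=> [p1 p2] [q1 q2] /= pS qS; rewrite xpair_eqE.
case: (eqVneq p1 i) => [e1|pi]; case: (eqVneq q1 i) => [e2|qi]; rewrite ?e1 ?e2 ?eqxx /= ?(negbTE pi) ?(negbTE qi).
- move=> npq.
  by case: p2 q2 npq => [] [] //= _; rewrite // inc_sym.
- by move=> _; have := c'I q1 q2 qS qi => /andP[h1 h2]; case: p2.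
- move=> _; have := c'I p1 p2 pS pi => /andP[h1 h2].
  by case: q2; rewrite inc_sym.
- by move=> npq; apply: (c'inc (p1, p2) (q1, q2)); rewrite /= ?remS ?xpair_eqE.
Qed.

Theorem mainTheorem3 (m : nat) (hm : 1 <= m) (M : strmatrix m (2 * m)) :
  disjoint_matrix M ->
  exists c : 'I_m -> bool -> 'I_(2 * m),
    forall p q : 'I_m * bool, p != q ->
      incomparable (M p.1 (c p.1 p.2)) (M q.1 (c q.1 q.2)).
Proof.
move=> dM.
have inj : forall i, injective (M i).
  move=> i j k e; apply/eqP/negPn/negP => njk.
  by have := inc_neq (dM i j k njk); rewrite e eqxx.
have U : forall i, i \in enum 'I_m -> uniq (map (M i) (enum 'I_(2 * m))).
  by move=> i _; rewrite map_inj_uniq ?enum_uniq.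
have A : forall r x y, r \in enum 'I_m -> x \in map (M r) (enum 'I_(2 * m)) ->
    y \in map (M r) (enum 'I_(2 * m)) -> x != y -> incomparable x y.
  move=> r x y _ /mapP [j _ ->] /mapP [k _ ->] nxy.
  apply: dM; apply: contraNneq nxy => ->; exact: eqxx.
have Z : forall r, r \in enum 'I_m -> 2 * size (enum 'I_m) <= size (map (M r) (enum 'I_(2 * m))).
  by move=> r _; rewrite size_map !size_enum_ord.
have [c [cR cI]] := @gen _ m (enum 'I_m) (fun i => map (M i) (enum 'I_(2 * m)))
  (size_enum_ord m) (enum_uniq _) U A Z.
have j0 : 'I_(2 * m) by exists 0; rewrite muln_gt0 hm.
exists (fun i b => odflt j0 [pick j | M i j == c i b]).
have E : forall i b, M i (odflt j0 [pick j | M i j == c i b]) = c i b.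
  move=> i b; case: pickP => [j /eqP //|none].
  have := cR i b (mem_enum _ i) => /mapP [j _ ej].
  by have := none j; rewrite ej eqxx.
move=> p q npq; rewrite !E; apply: cI => //; exact: mem_enum.
Qed.
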